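(* Let $\epsilon>0$, $q>0$, and let $\Lambda_\epsilon$ be an $\epsilon$-lattice under the $\ell_2$ norm. For any $\mathbf{x}\in\mathbb{R}^d$ and $\boldsymbol\lambda\in\Lambda_\epsilon$, the points $\boldsymbol\lambda+\mathbf{x}$ and $\boldsymbol\lambda-\mathbf{x}$ are contained in the same number of expanded Voronoi regions $\mathbf{Vor}^+(\boldsymbol\lambda')$, $\boldsymbol\lambda'\in\Lambda_\epsilon$.
   Context: A lattice is the set of integer combinations of a basis of $\mathbb{R}^d$. Under $\ell_2$, its packing radius $r_p$ is the supremum of $r$ such that balls of radius $r$ around distinct lattice points are disjoint and its cover radius $r_c$ is the infimum of $r$ such that balls of radius $r$ around lattice points cover $\mathbb{R}^d$; an $\epsilon$-lattice has $\epsilon=r_p\le r_c\le3\epsilon$. The Voronoi region of $\boldsymbol\lambda'$ is $\mathbf{Vor}(\boldsymbol\lambda')=\{\mathbf{y}:\|\mathbf{y}-\boldsymbol\lambda'\|_2<\|\mathbf{y}-\boldsymbol\lambda''\|_2\ \forall\boldsymbol\lambda''\in\Lambda_\epsilon\setminus\{\boldsymbol\lambda'\}\}$. The expanded Voronoi region $\mathbf{Vor}^+(\boldsymbol\lambda')$ is the set of points within $\ell_2$ distance $2q\epsilon$ of $\mathbf{Vor}(\boldsymbol\lambda')$. *)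

(* Defs.v *)
From HB Require Import structures.
From mathcomp Require Import all_boot all_order all_algebra.
From mathcomp Require Import boolp classical_sets cardinality reals.
Set Implicit Arguments. Unset Strict Implicit. Unset Printing Implicit Defensive.
Import Order.TTheory GRing.Theory Num.Theory.
Local Open Scope ring_scope.
Local Open Scope classical_set_scope.

Section Defs.
Variables (R : realType) (d : nat).

Definition l2norm (v : 'rV[R]_d) : R := Num.sqrt (\sum_(i < d) v ord0 i ^+ 2).

Definition lattice (B : 'M[R]_d) : set 'rV[R]_d :=
  [set (map_mx (fun k : int => k%:~R) z) *m B | z in [set: 'rV[int]_d]].

Definition is_basis (B : 'M[R]_d) : Prop := B \in unitmx.

Definition packing_radius (L : set 'rV[R]_d) : R :=
  sup [set r : R | 0 <= r /\ forall l1 l2, L l1 -> L l2 -> l1 != l2 ->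
        forall y, ~ (l2norm (y - l1) <= r /\ l2norm (y - l2) <= r)].

Definition cover_radius (L : set 'rV[R]_d) : R :=
  inf [set r : R | 0 <= r /\ forall y, exists2 l, L l & l2norm (y - l) <= r].

Definition eps_lattice (L : set 'rV[R]_d) (eps : R) : Prop :=
  packing_radius L = eps /\ eps <= cover_radius L /\ cover_radius L <= 3 * eps.

Definition Vor (L : set 'rV[R]_d) (l' : 'rV[R]_d) : set 'rV[R]_d :=
  [set y | forall l'', L l'' -> l'' != l' -> l2norm (y - l') < l2norm (y - l'')].

Definition dist_to (A : set 'rV[R]_d) (p : 'rV[R]_d) : R :=
  inf [set l2norm (p - y) | y in A].

Definition Vor_plus (L : set 'rV[R]_d) (q eps : R) (l' : 'rV[R]_d) : set 'rV[R]_d :=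
  [set p | dist_to (Vor L l') p <= 2 * q * eps].

End Defs.

(* Main.v *)
Require Import Defs.
From HB Require Import structures.
From mathcomp Require Import all_boot all_order all_algebra.
From mathcomp Require Import boolp classical_sets cardinality reals.
Import Order.TTheory GRing.Theory Num.Theory.
Local Open Scope ring_scope.
Local Open Scope classical_set_scope.
Local Open Scope card_scope.

Section H.
Variables (R : realType) (d : nat).
Implicit Types (v : 'rV[R]_d).

Lemma l2normN v : l2norm (- v) = l2norm v.
Proof. by rewrite /l2norm; congr Num.sqrt; apply: eq_bigr => i _; rewrite mxE sqrrN. Qed.

Definition refl (lam p : 'rV[R]_d) := lam *+ 2 - p.

Lemma reflK lam : involutive (refl lam).
Proof. by move=> p; rewrite /refl opprB addrC subrK. Qed.

Lemma refl_dist lam a b : l2norm (refl lam a - refl lam b) = l2norm (a - b).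
Proof.
rewrite -l2normN; congr l2norm; rewrite /refl opprB addrC opprB -addrA addKr //.
Qed.

Lemma lattice_refl (B : 'M[R]_d) lam p : lattice B lam -> lattice B p ->
  lattice B (refl lam p).
Proof.
move=> [z1 _ <-] [z2 _ <-]; exists (z1 *+ 2 - z2) => //.
by rewrite /refl raddfB raddfMn /= !mulr2n mulmxBl mulmxDl.
Qed.

Lemma Vor_refl (B : 'M[R]_d) lam l' y : lattice B lam ->
  Vor (lattice B) l' y -> Vor (lattice B) (refl lam l') (refl lam y).
Proof.
move=> hlam hV l'' hl'' hne.
rewrite refl_dist -(reflK lam l'') refl_dist.
apply: hV; first exact: lattice_refl.
apply: contra hne => /eqP <-; by rewrite reflK.
Qed.

Lemma dist_refl (B : 'M[R]_d) lam l' p : lattice B lam ->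
  dist_to (Vor (lattice B) (refl lam l')) (refl lam p) =
  dist_to (Vor (lattice B) l') p.
Proof.
move=> hlam; rewrite /dist_to; congr inf.
apply/seteqP; split => r /= [y hy <-].
  exists (refl lam y).
    by have := @Vor_refl B _ _ _ hlam hy; rewrite reflK.
  by rewrite -{1}(reflK lam p) refl_dist.
exists (refl lam y); first exact: Vor_refl.
by rewrite refl_dist.
Qed.

End H.

Theorem lemma32 (R : realType) (d : nat) (eps q : R) (B : 'M[R]_d)
  (heps : 0 < eps) (hq : 0 < q) (hB : is_basis B)
  (hL : eps_lattice (lattice B) eps)
  (x lam : 'rV[R]_d) (hlam : lattice B lam) :
  [set l' | lattice B l' /\ Vor_plus (lattice B) q eps l' (lam + x)] #=
  [set l' | lattice B l' /\ Vor_plus (lattice B) q eps l' (lam - x)].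
Proof.
have hf : @refl _ _ lam (lam + x) = lam - x.
  by rewrite /refl mulr2n opprD addrA addrK.
have key : forall l' p, lattice B l' ->
  Vor_plus (lattice B) q eps (@refl _ _ lam l') (@refl _ _ lam p) <->
  Vor_plus (lattice B) q eps l' p.
  by move=> l' p hl'; rewrite /Vor_plus /= dist_refl.
have -> : [set l' | lattice B l' /\ Vor_plus (lattice B) q eps l' (lam - x)] =
  @refl _ _ lam @` [set l' | lattice B l' /\ Vor_plus (lattice B) q eps l' (lam + x)].
  apply/seteqP; split => l /=.
    move=> [hl hv]; exists (@refl _ _ lam l); last exact: reflK.
    split; first exact: lattice_refl.
    by rewrite -(key _ _ (@lattice_refl _ _ B _ _ hlam hl)) reflK hf.
  move=> [l' [hl' hv] <-]; split; first exact: lattice_refl.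
  by rewrite -hf; apply/key.
apply: card_esym.
have hi : {in [set l' | lattice B l' /\ Vor_plus (lattice B) q eps l' (lam + x)] &,
  injective (@refl _ _ lam)}.
  by move=> a b _ _; apply: (can_inj (@reflK _ _ lam)).
exact: (inj_card_eq hi).
Qed.
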